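(* Let $n\ge 2$ be an integer and $A\subseteq L_n$. The following are equivalent: (i) $(X_n,\tau(A))$ is Lindelöf; (ii) $(X_n,\tau(A))$ is paracompact; (iii) $(X_n,\tau(A))$ is countably paracompact; (iv) $(X_n,\tau(A))$ is normal; (v) $L_n\setminus A$ does not contain a closed uncountable subset of $(L_n,\tau_E|_{L_n})$.
   Context: For $\overline{x},\overline{a}\in\mathbb R^n$ let $|\overline{x}-\overline{a}|$ be the Euclidean distance and $B(\overline{a},\epsilon)=\{\overline{x}\in\mathbb R^n:|\overline{x}-\overline{a}|<\epsilon\}$. Let $P_n=\{\overline{x}\in\mathbb R^n: x_n>0\}$, $L_n=\{\overline{x}\in\mathbb R^n: x_n=0\}$, $X_n=P_n\cup L_n$, and let $\tau_E$ denote the Euclidean topology on $X_n$. For $\overline{a}\in L_n$ and $\epsilon>0$ put $\overline{a(\epsilon)}=(a_1,\dots,a_{n-1},\epsilon)$ and $\tilde B(\overline{a},\epsilon)=\{\overline{a}\}\cup B(\overline{a(\epsilon)},\epsilon)$. For $A\subseteq L_n$, the topology $\tau(A)$ on $X_n$ is generated by the local bases: at $\overline{a}\in P_n$, the sets $B(\overline{a},\epsilon)$ with $0<\epsilon<a_n$; at $\overline{a}\in A$, the sets $B(\overline{a},\epsilon)\cap X_n$ with $\epsilon>0$; at $\overline{a}\in L_n\setminus A$, the sets $\tilde B(\overline{a},\epsilon)$ with $\epsilon>0$. *)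

(* Defs.v *)
From HB Require Import structures.
From mathcomp Require Import all_boot all_order all_algebra.
From mathcomp Require Import boolp classical_sets cardinality reals.
Set Implicit Arguments. Unset Strict Implicit. Unset Printing Implicit Defensive.
Import Order.TTheory GRing.Theory Num.Theory.
Local Open Scope classical_set_scope.
Local Open Scope ring_scope.

(* Points of R^(m.+1): functions 'I_(m.+1) -> R; the last coordinate x_n is
   the coordinate ord_max.  (The paper's n is m.+1.) *)
Definition pt (R : realType) (m : nat) := 'I_m.+1 -> R.

Definition edist (R : realType) (m : nat) (x a : pt R m) : R :=
  Num.sqrt (\sum_(i < m.+1) (x i - a i) ^+ 2).

Definition eball (R : realType) (m : nat) (a : pt R m) (e : R) : set (pt R m) :=
  [set x | edist x a < e].

Definition Pn (R : realType) (m : nat) : set (pt R m) := [set x | 0 < x ord_max].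
Definition Ln (R : realType) (m : nat) : set (pt R m) := [set x | x ord_max = 0].
Definition Xn (R : realType) (m : nat) : set (pt R m) := @Pn R m `|` @Ln R m.

Definition a_eps (R : realType) (m : nat) (a : pt R m) (e : R) : pt R m :=
  fun i => if i == ord_max then e else a i.

Definition tball (R : realType) (m : nat) (a : pt R m) (e : R) : set (pt R m) :=
  [set a] `|` eball (a_eps a e) e.

Definition tau_base (R : realType) (m : nat) (A : set (pt R m)) (a : pt R m)
    (V : set (pt R m)) : Prop :=
  (@Pn R m a /\ exists e : R, 0 < e /\ e < a ord_max /\ V = eball a e)
  \/ (A a /\ exists e : R, 0 < e /\ V = eball a e `&` @Xn R m)
  \/ (@Ln R m a /\ ~ A a /\ exists e : R, 0 < e /\ V = tball a e).

Definition tau_open (R : realType) (m : nat) (A : set (pt R m))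
    (U : set (pt R m)) : Prop :=
  U `<=` @Xn R m /\
  forall a, U a -> exists V, tau_base A a V /\ V `<=` U.

Definition closed_in {T} (X : set T) (op : set T -> Prop) (F : set T) : Prop :=
  F `<=` X /\ op (X `\` F).

Definition open_cover {T} (X : set T) (op : set T -> Prop) {I : Type}
    (U : I -> set T) : Prop :=
  (forall i, op (U i)) /\ X `<=` \bigcup_i U i.

Definition refines {T} {I J : Type} (V : J -> set T) (U : I -> set T) : Prop :=
  forall j, exists i, V j `<=` U i.

Definition locally_finite {T} (X : set T) (op : set T -> Prop) {J : Type}
    (V : J -> set T) : Prop :=
  forall x, X x -> exists W, op W /\ W x /\
    finite_set [set j | V j `&` W !=set0].

Definition lindelof {T} (X : set T) (op : set T -> Prop) : Prop :=
  forall (I : Type) (U : I -> set T), open_cover X op U ->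
    exists J : set I, countable J /\ X `<=` \bigcup_(i in J) U i.

Definition paracompact {T} (X : set T) (op : set T -> Prop) : Prop :=
  forall (I : Type) (U : I -> set T), open_cover X op U ->
    exists (J : Type) (V : J -> set T),
      open_cover X op V /\ refines V U /\ locally_finite X op V.

Definition countably_paracompact {T} (X : set T) (op : set T -> Prop) : Prop :=
  forall (U : nat -> set T), open_cover X op U ->
    exists (J : Type) (V : J -> set T),
      open_cover X op V /\ refines V U /\ locally_finite X op V.

Definition normal {T} (X : set T) (op : set T -> Prop) : Prop :=
  forall F G, closed_in X op F -> closed_in X op G -> F `&` G = set0 ->
    exists U V, op U /\ op V /\ F `<=` U /\ G `<=` V /\ U `&` V = set0.

Definition closed_in_Ln (R : realType) (m : nat) (F : set (pt R m)) : Prop :=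
  F `<=` @Ln R m /\
  forall x, @Ln R m x -> ~ F x -> exists e : R, 0 < e /\ eball x e `&` F = set0.

(* Main.v *)
Require Import Defs.
From HB Require Import structures.
From mathcomp Require Import all_boot all_order all_algebra.
From mathcomp Require Import boolp classical_sets cardinality reals.
From mathcomp Require Import ring lra.
Import Order.TTheory GRing.Theory Num.Theory.
Local Open Scope classical_set_scope.
Local Open Scope ring_scope.
Set Implicit Arguments. Unset Strict Implicit. Unset Printing Implicit Defensive.
Section Metric.
Variable R : realType.
Variable m : nat.
Local Notation P := (pt R m).

Definition sq (x a : P) := \sum_(i < m.+1) (x i - a i) ^+ 2.

Lemma sq_ge0 (x a : P) : 0 <= sq x a.
Proof. by apply: sumr_ge0 => i _; apply: sqr_ge0. Qed.

Lemma edist_ge0 (x a : P) : 0 <= edist x a.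
Proof. exact: sqrtr_ge0. Qed.

Lemma edist_sq (x a : P) : edist x a ^+ 2 = sq x a.
Proof. by rewrite /edist sqr_sqrtr // sq_ge0. Qed.

Lemma edist_lt (x a : P) (e : R) : 0 <= e -> (edist x a < e) = (sq x a < e ^+ 2).
Proof.
move=> e0; rewrite -edist_sq (ltr_pXn2r (_ : 0 < 2)%N) // nnegrE ?edist_ge0 //.
Qed.

Lemma edist_le (x a : P) (e : R) : 0 <= e -> (edist x a <= e) = (sq x a <= e ^+ 2).
Proof.
move=> e0; rewrite -edist_sq (ler_pXn2r (_ : 0 < 2)%N) // nnegrE ?edist_ge0 //.
Qed.

Lemma sq_sym (x a : P) : sq x a = sq a x.
Proof. by apply: eq_bigr => i _; rewrite -sqrrN opprB. Qed.

Lemma edist_sym (x a : P) : edist x a = edist a x.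
Proof. by rewrite /edist -/(sq x a) -/(sq a x) sq_sym. Qed.

Lemma sq_xx (x : P) : sq x x = 0.
Proof. by apply: big1 => i _; rewrite subrr expr0n. Qed.

Lemma edist_xx (x : P) : edist x x = 0.
Proof. by rewrite /edist -/(sq x x) sq_xx sqrtr0. Qed.

Lemma sq_eq0 (x a : P) : sq x a = 0 -> x = a.
Proof.
move=> H; apply: funext => i.
have := @psumr_eq0P _ _ _ _ (fun i _ => sqr_ge0 (x i - a i)) H i isT.
by move/eqP; rewrite expf_eq0 /= subr_eq0 => /eqP.
Qed.

Lemma edist_eq0 (x a : P) : edist x a = 0 -> x = a.
Proof.
move=> H; apply: sq_eq0; rewrite -edist_sq H; by rewrite expr0n.
Qed.

Lemma sq_coord (x a : P) i : (x i - a i) ^+ 2 <= sq x a.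
Proof.
rewrite /sq (bigD1 i) //= lerDl; apply: sumr_ge0 => j _; exact: sqr_ge0.
Qed.

Lemma coord_le (x a : P) i : `|x i - a i| <= edist x a.
Proof.
rewrite -sqrtr_sqr /edist ler_sqrt ?sq_coord //; exact: sq_ge0.
Qed.

Lemma edist_le_coord (x a : P) (r : R) : 0 <= r -> (forall i, `|x i - a i| <= r) ->
  edist x a <= m.+1%:R * r.
Proof.
move=> r0 H; rewrite edist_le ?mulr_ge0 //.
apply: (@le_trans _ _ (\sum_(i < m.+1) r ^+ 2)).
  apply: ler_sum => i _; rewrite -real_normK ?num_real //.
  by rewrite lerXn2r ?nnegrE ?normr_ge0.
have h : m.+1%:R <= m.+1%:R ^+ 2 :> R by rewrite expr2 ler_peMl ?ler0n ?ler1n.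
rewrite sumr_const card_ord exprMn -[X in X <= _]mulr_natr mulrC.

have hr := sqr_ge0 r; nra.
Qed.

Lemma cs (u v : 'I_m.+1 -> R) :
  \sum_i u i * v i <= Num.sqrt (\sum_i u i ^+ 2) * Num.sqrt (\sum_i v i ^+ 2).
Proof.
set a := Num.sqrt _; set b := Num.sqrt _.
have Su : 0 <= \sum_i u i ^+ 2 by apply: sumr_ge0 => i _; exact: sqr_ge0.
have Sv : 0 <= \sum_i v i ^+ 2 by apply: sumr_ge0 => i _; exact: sqr_ge0.
have Ha : a ^+ 2 = \sum_i u i ^+ 2 by rewrite sqr_sqrtr.
have Hb : b ^+ 2 = \sum_i v i ^+ 2 by rewrite sqr_sqrtr.
have a0 : 0 <= a by exact: sqrtr_ge0.
have b0 : 0 <= b by exact: sqrtr_ge0.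
have [az|anz] := eqVneq a 0.
  have u0 : forall i, u i = 0.
    have S0 : \sum_i u i ^+ 2 = 0 by rewrite -Ha az expr0n.
    move=> i; have := @psumr_eq0P _ _ _ _ (fun i _ => sqr_ge0 (u i)) S0 i isT.
    by move/eqP; rewrite expf_eq0 /= => /eqP.
  by rewrite big1 ?az ?mul0r // => i _; rewrite u0 mul0r.
have [bz|bnz] := eqVneq b 0.
  have v0 : forall i, v i = 0.
    have S0 : \sum_i v i ^+ 2 = 0 by rewrite -Hb bz expr0n.
    move=> i; have := @psumr_eq0P _ _ _ _ (fun i _ => sqr_ge0 (v i)) S0 i isT.
    by move/eqP; rewrite expf_eq0 /= => /eqP.
  by rewrite big1 ?bz ?mulr0 // => i _; rewrite v0 mulr0.
have ap : 0 < a by rewrite lt_neqAle eq_sym anz.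
have bp : 0 < b by rewrite lt_neqAle eq_sym bnz.
have H : 0 <= \sum_i (b * u i - a * v i) ^+ 2 by apply: sumr_ge0 => i _; exact: sqr_ge0.
have E : forall i, (b * u i - a * v i) ^+ 2 =
   b ^+ 2 * u i ^+ 2 - (a * b * 2) * (u i * v i) + a ^+ 2 * v i ^+ 2.
  by move=> i; ring.
rewrite (eq_bigr _ (fun i _ => E i)) big_split /= sumrB -!mulr_sumr -Ha -Hb in H.
have ab0 : 0 < a * b by rewrite mulr_gt0.
set S := \sum_i u i * v i in H *.
have : (a * b) * S <= (a * b) * (a * b) by nra.
by rewrite ler_pM2l.
Qed.

Lemma edist_triangle (x y z : P) : edist x z <= edist x y + edist y z.
Proof.
rewrite edist_le ?addr_ge0 ?edist_ge0 //.
have E : sq x z = \sum_i ((x i - y i) + (y i - z i)) ^+ 2.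
  by apply: eq_bigr => i _; congr (_ ^+ 2); ring.
rewrite E.
have E2 : forall i, ((x i - y i) + (y i - z i)) ^+ 2 =
  (x i - y i) ^+ 2 + 2 * ((x i - y i) * (y i - z i)) + (y i - z i) ^+ 2.
  by move=> i; ring.
rewrite (eq_bigr _ (fun i _ => E2 i)) !big_split /= -mulr_sumr.
have := cs (fun i => x i - y i) (fun i => y i - z i).
rewrite -/(sq x y) -/(sq y z) -/(edist x y) -/(edist y z) -!edist_sq.
move=> h; nra.
Qed.

End Metric.
Section Tangent.
Variable R : realType.
Variable m : nat.
Local Notation P := (pt R m).
Local Notation w := (widen_ord (leqnSn m)).

Definition hsq (x a : P) := \sum_(i < m) (x (w i) - a (w i)) ^+ 2.

Lemma hsq_ge0 (x a : P) : 0 <= hsq x a.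
Proof. by apply: sumr_ge0 => i _; apply: sqr_ge0. Qed.

Lemma sq_split (x a : P) : sq x a = hsq x a + (x ord_max - a ord_max) ^+ 2.
Proof. by rewrite /sq big_ord_recr. Qed.

Lemma w_neq (i : 'I_m) : w i != ord_max.
Proof.
apply/eqP => /(congr1 val) /= E; by move: (ltn_ord i); rewrite E ltnn.
Qed.

Lemma a_eps_w (a : P) e (i : 'I_m) : a_eps a e (w i) = a (w i).
Proof. by rewrite /a_eps (negbTE (w_neq i)). Qed.

Lemma a_eps_max (a : P) e : a_eps a e ord_max = e.
Proof. by rewrite /a_eps eqxx. Qed.

Lemma hsq_eps (z x : P) e : hsq z (a_eps x e) = hsq z x.
Proof. by apply: eq_bigr => i _; rewrite a_eps_w. Qed.

Lemma hsq_epsl (z x : P) e : hsq (a_eps x e) z = hsq x z.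
Proof. by apply: eq_bigr => i _; rewrite a_eps_w. Qed.

Lemma hsq_xx (x : P) : hsq x x = 0.
Proof. by apply: big1 => i _; rewrite subrr expr0n. Qed.

Lemma hsq_le (x a : P) : hsq x a <= sq x a.
Proof. by rewrite sq_split lerDl sqr_ge0. Qed.

Lemma tb_char (x z : P) (e : R) : 0 < e ->
  eball (a_eps x e) e z <-> hsq z x + z ord_max ^+ 2 < 2 * e * z ord_max.
Proof.
move=> e0; rewrite /eball /= edist_lt ?ltW //. rewrite sq_split hsq_eps a_eps_max.
have -> : hsq z x + (z ord_max - e) ^+ 2 < e ^+ 2 =
   (hsq z x + z ord_max ^+ 2 < 2 * e * z ord_max).
  apply/idP/idP => h; lra.
by [].
Qed.

Lemma tb_pos (x z : P) (e : R) : 0 < e -> eball (a_eps x e) e z -> 0 < z ord_max.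
Proof.
move=> e0 /(tb_char _ _ e0) h; have h1 := hsq_ge0 z x; have h2 := sqr_ge0 (z ord_max).
nra.
Qed.

Lemma tb_mono (x z : P) (e1 e2 : R) : 0 < e1 -> e1 <= e2 ->
  eball (a_eps x e1) e1 z -> eball (a_eps x e2) e2 z.
Proof.
move=> e10 le h; have zp := tb_pos e10 h.
move: h; rewrite !tb_char //; last by apply: lt_le_trans le.
move=> h; nra.
Qed.

Lemma sq_Ln (z x : P) : Ln x -> sq z x = hsq z x + z ord_max ^+ 2.
Proof. by rewrite /Ln /= sq_split => ->; rewrite subr0. Qed.

Lemma tb_small (x z : P) (e : R) : 0 < e -> Ln x ->
  eball (a_eps x e) e z -> edist z x < 2 * e.
Proof.
move=> e0 Lx h; have zp := tb_pos e0 h.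
move: h; rewrite tb_char // => h.
have h1 := hsq_ge0 z x.
rewrite edist_lt; last by lra.
rewrite sq_Ln //.
have : z ord_max < 2 * e by nra.
move=> h2; nra.
Qed.

Lemma tb_meet (x y : P) (s r : R) : 0 < s -> 0 < r -> Ln x -> Ln y ->
  edist x y < Num.min s r ->
  eball (a_eps x s) s (a_eps x (Num.min s r)) /\
  eball (a_eps y r) r (a_eps x (Num.min s r)).
Proof.
move=> s0 r0 Lx Ly.
set t := Num.min s r.
have t0 : 0 < t by rewrite lt_min s0 r0.
have ts : t <= s by rewrite ge_min lexx.
have tr : t <= r by rewrite ge_min lexx orbT.
rewrite edist_lt ?ltW // sq_Ln // => h.
have Ly' : y ord_max = 0 by [].
have Lx' : x ord_max = 0 by [].
rewrite Lx' expr0n addr0 in h.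
split; rewrite tb_char // hsq_epsl a_eps_max.
  rewrite hsq_xx; nra.
have h1 := hsq_ge0 x y; nra.
Qed.

Lemma tb_closed (x z : P) (e e2 : R) : 0 < e -> e < e2 -> Ln x -> 0 <= z ord_max ->
  edist z (a_eps x e) <= e -> z = x \/ eball (a_eps x e2) e2 z.
Proof.
move=> e0 ee2 Lx z0; rewrite (edist_le _ _ (ltW e0)) sq_split hsq_eps a_eps_max => h.
have h1 := hsq_ge0 z x.
have [zm|zm] := eqVneq (z ord_max) 0.
  left; apply: sq_eq0; rewrite sq_Ln // zm expr0n addr0.
  rewrite zm sub0r sqrrN in h; apply/eqP; rewrite eq_le h1 andbT; lra.
right; have zp : 0 < z ord_max by rewrite lt_neqAle eq_sym zm.
rewrite tb_char; last by lra.
nra.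
Qed.

Lemma edist_eps (x : P) (e : R) : Ln x -> 0 <= e -> edist x (a_eps x e) = e.
Proof.
move=> Lx e0; rewrite /edist -/(sq _ _) sq_split hsq_eps hsq_xx a_eps_max add0r.
rewrite Lx sub0r sqrrN sqrtr_sqr ger0_norm //.
Qed.

Lemma coord_max_lt (z y : P) (e : R) : edist z y < e -> y ord_max - e < z ord_max.
Proof.
move=> h; have := coord_le z y ord_max.
move=> h2; have h3 : `|z ord_max - y ord_max| < e by apply: le_lt_trans h2 h.
move: h3; rewrite ltr_norml => /andP [h4 _]; lra.
Qed.

End Tangent.
Section Topo.
Variable R : realType.
Variable m : nat.
Local Notation P := (pt R m).
Variable A : set P.
Hypothesis hA : A `<=` @Ln R m.
Local Notation X := (@Xn R m).
Local Notation op := (tau_open A).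

Lemma PnLn (a : P) : Pn a -> Ln a -> False.
Proof. by rewrite /Pn /Ln /= => h E; rewrite E ltxx in h. Qed.

Lemma op_of (U : set P) : U `<=` X ->
  (forall a, U a -> Pn a -> exists e, 0 < e /\ e < a ord_max /\ eball a e `<=` U) ->
  (forall a, U a -> A a -> exists e, 0 < e /\ eball a e `&` X `<=` U) ->
  (forall a, U a -> Ln a -> ~ A a -> exists e, 0 < e /\ tball a e `<=` U) ->
  op U.
Proof.
move=> UX H1 H2 H3; split => // a Ua.
case: (UX a Ua) => [Pa|La].
  have [e [e0 [ea sub]]] := H1 a Ua Pa.
  by exists (eball a e); split => //; left; split => //; exists e.
have [Aa|nAa] := pselect (A a).
  have [e [e0 sub]] := H2 a Ua Aa.
  by exists (eball a e `&` X); split => //; right; left; split => //; exists e.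
have [e [e0 sub]] := H3 a Ua La nAa.
by exists (tball a e); split => //; right; right; split => //; split => //; exists e.
Qed.

Lemma op_nb (U : set P) a : op U -> U a ->
  (Pn a -> exists e, 0 < e /\ e < a ord_max /\ eball a e `<=` U) /\
  (A a -> exists e, 0 < e /\ eball a e `&` X `<=` U) /\
  (Ln a -> ~ A a -> exists e, 0 < e /\ tball a e `<=` U).
Proof.
move=> [UX H] Ua; have [V [hb VU]] := H a Ua.
case: hb => [[Pa [e [e0 [ea VE]]]]|[[Aa [e [e0 VE]]]|[La [nAa [e [e0 VE]]]]]]; subst V.
- split; first by move=> _; exists e.
  split; first by move=> /hA La; exfalso; exact: PnLn Pa La.
  by move=> La; exfalso; exact: PnLn Pa La.
- split; first by move=> Pa; exfalso; exact: PnLn Pa (hA Aa).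
  split; first by move=> _; exists e.
  by [].
- split; first by move=> Pa; exfalso; exact: PnLn Pa La.
  split; first by [].
  by move=> _ _; exists e.
Qed.

Lemma op_sub (U : set P) : op U -> U `<=` X.
Proof. by case. Qed.

Lemma Pn_ball (a : P) e : e <= a ord_max -> eball a e `<=` @Pn R m.
Proof.
move=> ea z /= /coord_max_lt h; rewrite /Pn /=; lra.
Qed.

Lemma tb_Pn (a : P) e : 0 < e -> eball (a_eps a e) e `<=` @Pn R m.
Proof. by move=> e0 z /(tb_pos e0). Qed.

Lemma tball_X (a : P) e : Ln a -> 0 < e -> tball a e `<=` X.
Proof.
move=> La e0 z [->|/(tb_Pn e0) h]; [by right | by left].
Qed.

Lemma eopen (U : set P) : U `<=` X ->
  (forall y, U y -> exists e, 0 < e /\ forall z, X z -> edist z y < e -> U z) ->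
  op U.
Proof.
move=> UX H; apply: op_of => //.
- move=> a Ua Pa; have [e [e0 h]] := H a Ua.
  have ap : 0 < a ord_max := Pa.
  exists (Num.min e (a ord_max / 2)); split; first by rewrite lt_min e0 divr_gt0.
  split; first by rewrite gt_min; apply/orP; right; lra.
  move=> z zb; apply: h.
    have hle : a ord_max / 2 <= a ord_max by lra.
    left; apply: (Pn_ball hle).
    by apply: lt_le_trans zb _; rewrite ge_min lexx orbT.
  by apply: lt_le_trans zb _; rewrite ge_min lexx.
- move=> a Ua Aa; have [e [e0 h]] := H a Ua.
  by exists e; split => // z [zb zX]; apply: h.
- move=> a Ua La nAa; have [e [e0 h]] := H a Ua.
  exists (e / 2); split; first by lra.
  move=> z [->|zb] //; apply: h; first by left; apply: tb_Pn zb; lra.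
  have := tb_small (e := e / 2) _ La zb; rewrite edist_sym.
  have -> : 2 * (e / 2) = e by field.
  by rewrite edist_sym; apply; lra.
Qed.

Lemma op_X : op X.
Proof. by apply: eopen => // y _; exists 1; split => //. Qed.

Lemma op_set0 : op set0.
Proof. by split => // a. Qed.

Lemma tball_open (a : P) e : Ln a -> ~ A a -> 0 < e -> op (tball a e).
Proof.
move=> La nAa e0; apply: op_of; first exact: tball_X.
- move=> z zt Pz; case: zt => [zE|zb]; first by exfalso; rewrite zE in Pz; exact: PnLn Pz La.
  have zp : 0 < z ord_max := Pz.
  have d0 : 0 < e - edist z (a_eps a e) by rewrite subr_gt0.
  exists (Num.min (e - edist z (a_eps a e)) (z ord_max / 2)).
  split; first by rewrite lt_min d0 divr_gt0.
  split; first by rewrite gt_min; apply/orP; right; lra.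
  move=> y yb; right; rewrite /eball /=.
  apply: (le_lt_trans (edist_triangle y z (a_eps a e))).
  have : edist y z < e - edist z (a_eps a e).
    by apply: lt_le_trans yb _; rewrite ge_min lexx.
  lra.
- move=> z zt Az; case: zt => [zE|zb]; first by rewrite zE in Az.
  by exfalso; exact: PnLn (tb_Pn e0 zb) (hA Az).
- move=> z zt Lz nAz; case: zt => [zE|zb].
    by exists e; split => //; rewrite zE.
  by exfalso; exact: PnLn (tb_Pn e0 zb) Lz.
Qed.

Lemma op_setI (U V : set P) : op U -> op V -> op (U `&` V).
Proof.
move=> oU oV; apply: op_of.
- by move=> z [Uz _]; exact: op_sub oU _ Uz.
- move=> a [Ua Va] Pa.
  have [h1 _] := op_nb oU Ua; have [e1 [e10 [e1a s1]]] := h1 Pa.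
  have [h2 _] := op_nb oV Va; have [e2 [e20 [e2a s2]]] := h2 Pa.
  exists (Num.min e1 e2); split; first by rewrite lt_min e10 e20.
  split; first by rewrite gt_min e1a.
  move=> z zb; split; [apply: s1|apply: s2]; apply: lt_le_trans zb _;
    by rewrite ge_min lexx ?orbT.
- move=> a [Ua Va] Aa.
  have [_ [h1 _]] := op_nb oU Ua; have [e1 [e10 s1]] := h1 Aa.
  have [_ [h2 _]] := op_nb oV Va; have [e2 [e20 s2]] := h2 Aa.
  exists (Num.min e1 e2); split; first by rewrite lt_min e10 e20.
  move=> z [zb zX]; split; [apply: s1|apply: s2]; split => //; apply: lt_le_trans zb _;
    by rewrite ge_min lexx ?orbT.
- move=> a [Ua Va] La nAa.
  have [_ [_ h1]] := op_nb oU Ua; have [e1 [e10 s1]] := h1 La nAa.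
  have [_ [_ h2]] := op_nb oV Va; have [e2 [e20 s2]] := h2 La nAa.
  have t0 : 0 < Num.min e1 e2 by rewrite lt_min e10 e20.
  exists (Num.min e1 e2); split => //.
  move=> z [->|zb]; first by split; [apply: s1; left|apply: s2; left].
  split; [apply: s1|apply: s2]; right; apply: (tb_mono t0 _ zb);
    by rewrite ge_min lexx ?orbT.
Qed.

Lemma op_bigcup (I : Type) (D : set I) (U : I -> set P) :
  (forall i, D i -> op (U i)) -> op (\bigcup_(i in D) U i).
Proof.
move=> H; split.
  by move=> z [i Di Uz]; exact: op_sub (H i Di) _ Uz.
move=> a [i Di Ua]; have [_ h] := H i Di; have [V [hb VU]] := h a Ua.
exists V; split => // z Vz; exists i => //; exact: VU.
Qed.

Lemma op_setU (U V : set P) : op U -> op V -> op (U `|` V).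
Proof.
move=> oU oV.
have -> : U `|` V = \bigcup_(b in [set: bool]) (if b then U else V).
  apply/seteqP; split => z.
    by case => h; [exists true | exists false].
  by case => -[] _ h; [left|right].
by apply: op_bigcup => -[].
Qed.

Lemma op_diff (U C : set P) : op U -> closed_in X op C -> op (U `\` C).
Proof.
move=> oU [CX oC].
have -> : U `\` C = U `&` (X `\` C).
  apply/seteqP; split => z.
    by move=> [Uz nCz]; split => //; split => //; exact: op_sub oU _ Uz.
  by move=> [Uz [_ nCz]].
exact: op_setI.
Qed.

Lemma op_diff_fin (U : set P) (C : nat -> set P) n : op U ->
  (forall k, closed_in X op (C k)) ->
  op [set z | U z /\ forall k, (k < n)%N -> ~ C k z].
Proof.
move=> oU hC; elim: n => [|n IH].
  by have -> : [set z | U z /\ forall k, (k < 0)%N -> ~ C k z] = U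
    by apply/seteqP; split => z; [case|split].
have -> : [set z | U z /\ forall k, (k < n.+1)%N -> ~ C k z] =
   [set z | U z /\ forall k, (k < n)%N -> ~ C k z] `\` C n.
  apply/seteqP; split => z.
    by move=> [Uz h]; split; [split => // k kn; apply: h; rewrite ltnS ltnW|apply: h].
  move=> [[Uz h] nC]; split => // k; rewrite ltnS leq_eqVlt => /orP [/eqP ->//|]; exact: h.
exact: op_diff.
Qed.

Lemma cball_closed (c : P) (r : R) : closed_in X op (X `&` [set z | edist z c <= r]).
Proof.
split; first by move=> z [].
apply: eopen; first by move=> z [].
move=> y [Xy nC].
have yc : r < edist y c.
  by rewrite ltNge; apply/negP => h; apply: nC.
exists (edist y c - r); split; first by rewrite subr_gt0.
move=> z Xz zy; split => //; move=> [_ /= zc].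
have := edist_triangle y z c; rewrite (edist_sym y z); lra.
Qed.

Lemma eball_open (a : P) e : op (eball a e `&` X).
Proof.
apply: eopen; first by move=> z [].
move=> y [yb Xy]; exists (e - edist y a); split; first by rewrite subr_gt0.
move=> z Xz zy; split => //; rewrite /eball /=.
have := edist_triangle z y a; lra.
Qed.

Lemma regular (U : set P) x : op U -> U x ->
  exists V C, op V /\ closed_in X op C /\ V x /\ V `<=` C /\ C `<=` U.
Proof.
move=> oU Ux; have [H1 [H2 H3]] := op_nb oU Ux.
have Xx := op_sub oU Ux.
case: Xx => [Px|Lx].
  have [e [e0 [ex sub]]] := H1 Px.
  exists (eball x (e / 2) `&` X), (X `&` [set z | edist z x <= e / 2]).
  split; first exact: eball_open.
  split; first exact: cball_closed.
  split; first by split => //; [rewrite /eball /= edist_xx; lra|left].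
  split; first by move=> z [zb Xz]; split => //; apply: ltW.
  by move=> z [Xz /= zb]; apply: sub; rewrite /eball /=; lra.
have [Aa|nAa] := pselect (A x).
  have [e [e0 sub]] := H2 Aa.
  exists (eball x (e / 2) `&` X), (X `&` [set z | edist z x <= e / 2]).
  split; first exact: eball_open.
  split; first exact: cball_closed.
  split; first by split => //; [rewrite /eball /= edist_xx; lra|right].
  split; first by move=> z [zb Xz]; split => //; apply: ltW.
  by move=> z [Xz /= zb]; apply: sub; split => //; rewrite /eball /=; lra.
have [e [e0 sub]] := H3 Lx nAa.
have e20 : 0 < e / 2 by lra.
exists (tball x (e / 2)), (X `&` [set z | edist z (a_eps x (e / 2)) <= e / 2]).
split; first exact: tball_open.
split; first exact: cball_closed.
split; first by left.
split.
  move=> z zt; split; first exact: tball_X zt.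
  case: zt => [->|zb]; first by rewrite /= edist_eps //; lra.
  exact: ltW.
move=> z [Xz /= zb]; apply: sub.
have z0 : 0 <= z ord_max.
  by case: Xz => [h|h]; [apply: ltW|rewrite /Ln /= in h; rewrite h].
have ee : e / 2 < e by lra.
by have [->|h] := tb_closed e20 ee Lx z0 zb; [left|right].
Qed.

End Topo.
Lemma ex_least (p : nat -> Prop) n : p n -> exists n', p n' /\ forall k, (k < n')%N -> ~ p k.
Proof.
elim: n {-2}n (leqnn n) => [|N IH] n nN pn.
  move: nN; rewrite leqn0 => /eqP E; subst n.
  by exists 0%N; split => // k.
have [h|h] := pselect (exists k, (k < n)%N /\ p k).
  have [k [kn pk]] := h; apply: (IH k) => //.
  by rewrite -ltnS (leq_trans kn nN).
exists n; split => // k kn pk; apply: h; by exists k.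
Qed.

Lemma countable_enum (T : Type) (x0 : T) (J : set (option T)) :
  countable J -> exists g : nat -> T, forall y, J (Some y) -> exists n, g n = y.
Proof.
move=> /countable_injP [f finj].
have H : forall n, exists x : T,
    (exists y, J (Some y) /\ f (Some y) = n) -> J (Some x) /\ f (Some x) = n.
  move=> n; have [[y hy]|h] := pselect (exists y, J (Some y) /\ f (Some y) = n).
    by exists y.
  by exists x0.
have [g hg] := choice H.
exists g => y Jy; exists (f (Some y)).
have [Jg fg] := hg (f (Some y)) (ex_intro _ y (conj Jy erefl)).
have := finj (Some (g (f (Some y)))) (Some y).
rewrite !in_setE => /(_ Jg Jy fg) [E]; exact: E.
Qed.

Section Lind.
Variable R : realType.
Variable m : nat.
Local Notation P := (pt R m).
Variable A : set P.
Hypothesis hA : A `<=` @Ln R m.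
Local Notation X := (@Xn R m).
Local Notation op := (tau_open A).

Lemma X0 : X (fun _ => 0).
Proof. by right. Qed.

Lemma closed_X : closed_in X op X.
Proof.
split => //; have -> : X `\` X = set0 by apply/seteqP; split => z // [].
exact: op_set0.
Qed.

Lemma closed_set0 : closed_in X op set0.
Proof.
split => //; have -> : X `\` set0 = X by apply/seteqP; split => z; [case|move=> Xz; split].
exact: op_X.
Qed.

Lemma lind_seq (F : set P) (V : P -> set P) : lindelof X op ->
  closed_in X op F -> (forall x, F x -> op (V x) /\ V x x) ->
  exists g : nat -> P, forall z, F z -> exists n, V (g n) z.
Proof.
move=> L [FX oF] HV.
pose W (o : option P) := match o with
  | None => X `\` F
  | Some x => if pselect (F x) is left _ then V x else set0 end.
have cov : open_cover X op W.
  split.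
    case => [x|] //=; case: pselect => [Fx|_]; [exact: (HV x Fx).1|exact: op_set0].
  move=> z Xz; have [Fz|nFz] := pselect (F z).
    exists (Some z) => //=; case: pselect => // _; exact: (HV z Fz).2.
  by exists None.
have [J [cJ sub]] := L _ W cov.
have [g hg] := countable_enum (fun _ => 0) cJ.
exists g => z Fz; have [o Jo Woz] := sub z (FX z Fz).
case: o Jo Woz => [y|] Jo /=; last by case.
case: pselect => // Fy Vyz.
by have [n gn] := hg y Jo; exists n; rewrite gn.
Qed.

Lemma lind_para : lindelof X op -> paracompact X op.
Proof.
move=> L I U [oU covU].
have [i0 _] := covU _ X0.
have H : forall x, exists t : I * set P * set P,
   op t.1.2 /\ closed_in X op t.2 /\ t.1.2 `<=` t.2 /\ t.2 `<=` U t.1.1 /\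
   (X x -> t.1.2 x).
  move=> x; have [Xx|nXx] := pselect (X x).
    have [i _ Uix] := covU x Xx.
    have [V [C [oV [cC [Vx [VC CU]]]]]] := regular hA (oU i) Uix.
    by exists (i, V, C).
  exists (i0, set0, set0); split; first exact: op_set0.
  split; first exact: closed_set0.
  by split; [by []|split; [by []|by move=> /nXx]].
have [t ht] := choice H.
have [g hg] := lind_seq (F:=X) (V:=fun x => (t x).1.2) L closed_X
  (fun (x : P) Xx => conj (ht x).1 ((ht x).2.2.2.2 Xx)).
exists nat, (fun n => [set z | U (t (g n)).1.1 z /\
                 forall k, (k < n)%N -> ~ (t (g k)).2 z]).
split.
  split.
    move=> n; apply: (op_diff_fin hA); first exact: oU.
    by move=> k; exact: (ht (g k)).2.1.
  move=> z Xz; have [n Vz] := hg z Xz.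
  have Cz : (t (g n)).2 z by exact: (ht (g n)).2.2.1 _ Vz.
  have [n' [Cz' least]] := @ex_least (fun n => (t (g n)).2 z) n Cz.
  exists n' => //; split => //; exact: (ht (g n')).2.2.2.1 _ Cz'.
split.
  by move=> n; exists (t (g n)).1.1 => z [].
move=> z Xz; have [n Vz] := hg z Xz.
exists (t (g n)).1.2; split; first exact: (ht (g n)).1.
split => //.
apply: (@sub_finite_set _ _ `I_n.+1); last exact: finite_II.
move=> j [y [[_ hy] Vy]] /=; rewrite ltnNge; apply/negP => nj.
by apply: (hy n) => //; exact: (ht (g n)).2.2.1 _ Vy.
Qed.

Lemma lind_normal : lindelof X op -> normal X op.
Proof.
move=> L F G cF cG FG.
have sepF : forall x, exists t : set P * set P,
   op t.1 /\ closed_in X op t.2 /\ t.1 `<=` t.2 /\ t.2 `<=` X `\` G /\ (F x -> t.1 x).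
  move=> x; have [Fx|nFx] := pselect (F x).
    have oXG : op (X `\` G) by case: cG.
    have XGx : (X `\` G) x.
      split; first exact: cF.1 _ Fx.
      by move=> Gx; have : (F `&` G) x by []; rewrite FG.
    have [V [C [oV [cC [Vx [VC CU]]]]]] := regular hA oXG XGx.
    by exists (V, C).
  exists (set0, set0); split; [exact: op_set0|split; [exact: closed_set0|]].
  by split; [by []|split; [by []|by move=> /nFx]].
have sepG : forall x, exists t : set P * set P,
   op t.1 /\ closed_in X op t.2 /\ t.1 `<=` t.2 /\ t.2 `<=` X `\` F /\ (G x -> t.1 x).
  move=> x; have [Gx|nGx] := pselect (G x).
    have oXF : op (X `\` F) by case: cF.
    have XFx : (X `\` F) x.
      split; first exact: cG.1 _ Gx.
      by move=> Fx; have : (F `&` G) x by []; rewrite FG.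
    have [V [C [oV [cC [Vx [VC CU]]]]]] := regular hA oXF XFx.
    by exists (V, C).
  exists (set0, set0); split; [exact: op_set0|split; [exact: closed_set0|]].
  by split; [by []|split; [by []|by move=> /nGx]].
have [s hs] := choice sepF.
have [t ht] := choice sepG.
have [g hg] := lind_seq (V:=fun x => (s x).1) L cF (fun (x : P) Fx => conj (hs x).1 ((hs x).2.2.2.2 Fx)).
have [h hh] := lind_seq (V:=fun x => (t x).1) L cG (fun (x : P) Gx => conj (ht x).1 ((ht x).2.2.2.2 Gx)).
exists (\bigcup_(n in [set: nat]) [set z | (s (g n)).1 z /\
          forall k, (k < n.+1)%N -> ~ (t (h k)).2 z]).
exists (\bigcup_(n in [set: nat]) [set z | (t (h n)).1 z /\
          forall k, (k < n.+1)%N -> ~ (s (g k)).2 z]).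
split.
  apply: op_bigcup => n _; apply: (op_diff_fin hA).
    exact: (hs _).1.
  by move=> k; exact: (ht _).2.1.
split.
  apply: op_bigcup => n _; apply: (op_diff_fin hA).
    exact: (ht _).1.
  by move=> k; exact: (hs _).2.1.
split.
  move=> z Fz; have [n Vz] := hg z Fz; exists n => //; split => // k _ Dz.
  by have [_ ] := (ht (h k)).2.2.2.1 _ Dz.
split.
  move=> z Gz; have [n Vz] := hh z Gz; exists n => //; split => // k _ Dz.
  by have [_ ] := (hs (g k)).2.2.2.1 _ Dz.
apply/seteqP; split => // z [[n _ [U1 U2]] [p _ [V1 V2]]].
have [np|pn] := leqP n p.
  by apply: (V2 n); [rewrite ltnS|exact: (hs (g n)).2.2.1 _ U1].
by apply: (U2 p); [rewrite ltnS ltnW|exact: (ht (h p)).2.2.1 _ V1].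
Qed.

End Lind.
Lemma countableU (T : Type) (A B : set T) : countable A -> countable B -> countable (A `|` B).
Proof.
move=> cA cB.
have -> : A `|` B = \bigcup_(b in [set: bool]) (if b then A else B).
  apply/seteqP; split => z.
    by case => h; [exists true | exists false].
  by case => -[] _ h; [left|right].
by apply: bigcup_countable => // -[].
Qed.

Lemma countable_image (T U : Type) (f : T -> U) (J : set T) : countable J -> countable (f @` J).
Proof. by move=> cJ; apply: card_le_trans (card_image_le f J) cJ. Qed.

Lemma countable_sub (T : Type) (A B : set T) : A `<=` B -> countable B -> countable A.
Proof. by move=> AB cB; apply: card_le_trans (subset_card_le AB) cB. Qed.

Section Rat.
Variable R : realType.
Variable m : nat.
Local Notation P := (pt R m).
Local Notation QT := ({ffun 'I_m.+1 -> rat} * rat)%type.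

Definition qpt (t : QT) : P := fun i => ratr (t.1 i).
Definition qball (t : QT) : set P := eball (qpt t) (ratr t.2).

Lemma rat_ball (x : P) (e : R) : 0 < e ->
  exists t : QT, qball t x /\ forall z, qball t z -> edist z x < e.
Proof.
move=> e0.
have M0 : 0 < m.+1%:R :> R by rewrite ltr0n.
set d := e / (3 * m.+1%:R).
have d0 : 0 < d by rewrite divr_gt0 // mulr_gt0.
have H : forall i, exists q : rat, x i - d < ratr q /\ ratr q < x i + d.
  move=> i; have [q] := @rat_in_itvoo R (x i - d) (x i + d) ltac:(lra).
  by rewrite in_itv /= => /andP [h1 h2]; exists q.
have [f hf] := choice H.
have [r] := @rat_in_itvoo R (e / 3) (2 * e / 3) ltac:(lra).
rewrite in_itv /= => /andP [r1 r2].
exists ([ffun i => f i], r).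
have dx : edist x (qpt ([ffun i => f i], r)) <= e / 3.
  have -> : e / 3 = m.+1%:R * d.
    rewrite /d; field; rewrite -natr1 addrC in M0; by rewrite gt_eqF.
  apply: edist_le_coord; first exact: ltW.
  move=> i; rewrite /qpt /= ffunE; have [h1 h2] := hf i.
  rewrite ler_norml; apply/andP; split; lra.
split; first by rewrite /qball /eball /=; lra.
move=> z; rewrite /qball /eball /= => zq.
have := edist_triangle z (qpt ([ffun i => f i], r)) x.
rewrite (edist_sym (qpt _) x); lra.
Qed.

Lemma qball_in (t : QT) (x : P) : qball t x ->
  exists e, 0 < e /\ forall z, edist z x < e -> qball t z.
Proof.
rewrite /qball /eball /= => h; exists (ratr t.2 - edist x (qpt t)).
split; first by rewrite subr_gt0.
move=> z zx; have := edist_triangle z x (qpt t); lra.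
Qed.

End Rat.

Section LV.
Variable R : realType.
Variable m : nat.
Local Notation P := (pt R m).
Variable A : set P.
Hypothesis hA : A `<=` @Ln R m.
Local Notation X := (@Xn R m).
Local Notation op := (tau_open A).
Local Notation QT := ({ffun 'I_m.+1 -> rat} * rat)%type.

Lemma sub_closed (F S : set P) : F `<=` @Ln R m `\` A -> closed_in_Ln F ->
  S `<=` F -> closed_in X op S.
Proof.
move=> FL [_ cF] SF; split; first by move=> z /SF /FL [Lz _]; right.
apply: op_of; first by move=> z [].
- move=> a _ Pa; exists (a ord_max / 2).
  have ap : 0 < a ord_max := Pa.
  split; first lra; split; first lra.
  have hle : a ord_max / 2 <= a ord_max by lra.
  move=> z /(Pn_ball hle) Pz; split; first by left.
  by move=> /SF /FL [Lz _]; exact: PnLn Pz Lz.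
- move=> a _ Aa; have La := hA Aa.
  have nFa : ~ F a by move=> /FL [_].
  have [e [e0 he]] := cF a La nFa.
  exists e; split => // z [zb Xz]; split => // /SF Fz.
  by have : (eball a e `&` F) z by []; rewrite he.
- move=> a [Xa nSa] La nAa; exists 1; split => //.
  move=> z [->|zb]; first by [].
  have Pz := tb_Pn (ltr01 : (0:R) < 1) zb.
  split; first by left.
  by move=> /SF /FL [Lz _]; exact: PnLn Pz Lz.
Qed.

Lemma lind_v : lindelof X op ->
  ~ exists F : set P, F `<=` @Ln R m `\` A /\ closed_in_Ln F /\ ~ countable F.
Proof.
move=> L [F [FL [cF ncF]]]; apply: ncF.
pose W (o : option P) := match o with
  | None => X `\` F
  | Some x => if pselect (F x) is left _ then tball x 1 else set0 end.
have cov : open_cover X op W.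
  split.
    case => [x|] /=; last by case: (sub_closed FL cF (fun z h => h)).
    case: pselect => [Fx|_]; last exact: op_set0.
    by have [Lx nAx] := FL x Fx; apply: (tball_open hA) => //.
  move=> z Xz; have [Fz|nFz] := pselect (F z).
    by exists (Some z) => //=; case: pselect => // _; left.
  by exists None.
have [J [cJ sub]] := L _ W cov.
apply: (countable_sub (B := (fun o => odflt (fun _ => 0) o) @` J)); last exact: countable_image.
move=> z Fz; have [Lz _] := FL z Fz.
have [o Jo Woz] := sub z (or_intror Lz).
case: o Jo Woz => [y|] Jo /=; last by case.
case: pselect => // Fy [zy|zb]; first by exists (Some y).
by exfalso; exact: PnLn (tb_Pn (ltr01 : (0:R) < 1) zb) Lz.
Qed.

Lemma v_lind :
  ~ (exists F : set P, F `<=` @Ln R m `\` A /\ closed_in_Ln F /\ ~ countable F) ->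
  lindelof X op.
Proof.
move=> NF I U [oU covU].
have [i0 _] := covU _ (X0 R m).
pose G := [set t : QT | exists i, qball t `&` X `<=` U i].
have Hi : forall t : QT, exists i, G t -> qball t `&` X `<=` U i.
  move=> t; have [[i hi]|h] := pselect (G t); first by exists i.
  by exists i0.
have [iF hiF] := choice Hi.
have Hj : forall z : P, exists i, X z -> U i z.
  move=> z; have [Xz|nXz] := pselect (X z).
    by have [i _ h] := covU z Xz; exists i.
  by exists i0.
have [jF hjF] := choice Hj.
pose K := [set z : P | Ln z /\ forall t, G t -> ~ qball t z].
have KL : K `<=` @Ln R m `\` A.
  move=> z [Lz hz]; split => // Az.
  have [i _ Uiz] := covU z (or_intror Lz).
  have [_ [h _]] := op_nb hA (oU i) Uiz.
  have [e [e0 he]] := h Az.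
  have [t [tz tsub]] := rat_ball z e0.
  apply: (hz t) => //; exists i => y [yt Xy]; apply: he; split => //.
  by rewrite /eball /=; apply: tsub.
have cK : closed_in_Ln K.
  split; first by move=> z [].
  move=> x Lx nKx.
  have [t [Gt tx]] : exists t, G t /\ qball t x.
    apply: contra_notP nKx => h; split => // t Gt tx; apply: h; by exists t.
  have [e [e0 he]] := qball_in tx.
  exists e; split => //; apply/seteqP; split => // z [zb [_ hz]].
  by apply: (hz t Gt); apply: he.
have cntK : countable K.
  apply: contra_notP NF => nc; by exists K.
exists ((iF @` G) `|` (jF @` K)); split.
  by apply: countableU; apply: countable_image => //; apply: countableP.
move=> z Xz.
have [[t [Gt tz]]|nt] := pselect (exists t, G t /\ qball t z).
  exists (iF t); first by left; exists t.
  by apply: (hiF t Gt); split.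
have Lz : Ln z.
  case: Xz => // Pz; exfalso; apply: nt.
  have [i _ Uiz] := covU z (or_introl Pz).
  have [h _] := op_nb hA (oU i) Uiz.
  have [e [e0 [ez he]]] := h Pz.
  have [t [tz tsub]] := rat_ball z e0.
  exists t; split => //; exists i => y [yt Xy]; apply: he.
  by rewrite /eball /=; apply: tsub.
exists (jF z); last exact: hjF.
right; exists z => //; split => // t Gt tz; apply: nt; by exists t.
Qed.

End LV.
Section Baire.
Variable R : realType.
Variable m : nat.
Local Notation P := (pt R m).

Definition eclosed (Q : set P) :=
  forall y, (forall e, 0 < e -> exists p, Q p /\ edist p y < e) -> Q y.

Variable Q : set P.
Hypothesis Qc : eclosed Q.
Variable c0 : P.
Hypothesis Qc0 : Q c0.
Hypothesis noiso : forall c rho z, Q c -> 0 < rho -> exists y, Q y /\ edist y c < rho /\ y <> z.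
Variable q : nat -> P.
Hypothesis Qq : forall j, Q (q j).
Hypothesis qdense : forall c e, Q c -> 0 < e -> exists j, edist (q j) c < e.
Variable r : nat -> R.
Hypothesis r0 : forall j, 0 < r j.

Let M : R := m.+1%:R.
Let M1 : 1 <= M. Proof. by rewrite /M ler1n. Qed.

Definition stepP k (s s' : P * R) :=
  Q s'.1 /\ 0 < s'.2 /\ edist s'.1 s.1 + s'.2 <= s.2 /\ s'.2 <= s.2 / 2 /\
  M * s'.2 < edist s'.1 (q k) /\ exists j, s'.1 = q j /\ M * s'.2 < r j.

Lemma step_ex k (s : P * R) : Q s.1 -> 0 < s.2 -> exists s', stepP k s s'.
Proof.
case: s => c rho /= Qc' rho0.
have rh2 : 0 < rho / 2 by lra.
have [y [Qy [yc ynq]]] := noiso (q k) Qc' rh2.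
have dyq : 0 < edist y (q k).
  rewrite lt_neqAle edist_ge0 andbT; apply/eqP => /esym /edist_eq0; exact: ynq.
set de := Num.min (rho / 2 - edist y c) (edist y (q k)).
have de0 : 0 < de by rewrite lt_min dyq andbT subr_gt0.
have de1 : de <= rho / 2 - edist y c by rewrite ge_min lexx.
have de2 : de <= edist y (q k) by rewrite ge_min lexx orbT.
have de20 : 0 < de / 2 by lra.
have [j qj] := qdense Qy de20.
set mn := Num.min (de / 4) (Num.min (rho / 2) (r j)).
have mn0 : 0 < mn by rewrite !lt_min r0 andbT; apply/andP; split; lra.
have mn1 : mn <= de / 4 by rewrite ge_min lexx.
have mn2 : mn <= rho / 2 by rewrite ge_min ge_min lexx orbT.
have mn3 : mn <= r j by rewrite ge_min ge_min lexx !orbT.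
have M1' := M1.
have M0 : 0 < M by lra.
set rh := mn / (2 * M).
have rhE : M * rh = mn / 2.
  by rewrite /rh; field; rewrite addrC natr1 pnatr_eq0.
have rh0 : 0 < rh by rewrite /rh divr_gt0 // mulr_gt0.
have rhle : rh <= mn / 2.
  rewrite -rhE; rewrite -[X in X <= _]mul1r; apply: ler_wpM2r; lra.
exists (q j, rh); rewrite /stepP /=.
have t1 := edist_triangle (q j) y c.
have t2 := edist_triangle y (q j) (q k).
rewrite (edist_sym y (q j)) in t2.
split; first exact: Qq.
split => //.
split; first lra.
split; first lra.
split; first lra.
exists j; split => //; lra.
Qed.

Lemma baire : exists x, Q x /\ (forall k, x <> q k) /\
  forall e, 0 < e -> exists j, edist x (q j) < e /\ edist x (q j) < r j.
Proof.
have H : forall ks : nat * (P * R), exists s', Q ks.2.1 -> 0 < ks.2.2 -> stepP ks.1 ks.2 s'.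
  case=> k s /=; have [[Qs s0]|h] := pselect (Q s.1 /\ 0 < s.2).
    by have [s' hs'] := step_ex k Qs s0; exists s'.
  by exists s => Qs s0; exfalso; apply: h.
have [st0 hst0] := choice H.
pose st k s := st0 (k, s).
have hst : forall k s, Q s.1 -> 0 < s.2 -> stepP k s (st k s) by move=> k s; exact: (hst0 (k, s)).
pose sq := fix sq (k : nat) : P * R := if k is k'.+1 then st k' (sq k') else (c0, 1).
have inv : forall k, Q (sq k).1 /\ 0 < (sq k).2.
  elim => [|k [IH1 IH2]] /=; first by split => //; lra.
  by have [h1 [h2 _]] := hst k (sq k) IH1 IH2.
have stp : forall k, stepP k (sq k) (sq k.+1).
  by move=> k; have [h1 h2] := inv k; exact: hst k (sq k) h1 h2.
pose c k := (sq k).1.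
pose rho k := (sq k).2.
have rho0 : forall k, 0 < rho k by move=> k; exact: (inv k).2.
have coordstep : forall k i, `|c k.+1 i - c k i| <= rho k - rho k.+1.
  move=> k i; have [_ [_ [h _]]] := stp k.
  have := coord_le (c k.+1) (c k) i; rewrite /c /rho; lra.
have nest : forall i k l, (k <= l)%N ->
    c k i - rho k <= c l i - rho l /\ c l i + rho l <= c k i + rho k.
  move=> i k; elim => [|l IH].
    by rewrite leqn0 => /eqP ->; split; lra.
  rewrite leq_eqVlt => /orP [/eqP ->|kl]; first by split; lra.
  have [h1 h2] := IH kl.
  have := coordstep l i; rewrite ler_norml => /andP [h3 h4].
  split; lra.
pose x : P := fun i => sup [set c k i - rho k | k in [set: nat]].
have ub : forall i k l, c l i - rho l <= c k i + rho k.
  move=> i k l; have hk := rho0 k; have hl := rho0 l.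
  have [kl|lk] := leqP k l.
    by have [_ h] := nest i k l kl; lra.
  by have [h _] := nest i l k (ltnW lk); lra.
have xb : forall i k, c k i - rho k <= x i /\ x i <= c k i + rho k.
  move=> i k; split.
    apply: ub_le_sup; first by exists (c k i + rho k) => v [l _ <-]; apply: ub.
    by exists k.
  apply: ge_sup; first by exists (c 0%N i - rho 0%N), 0%N.
  by move=> v [l _ <-]; apply: ub.
have xc : forall k, edist x (c k) <= M * rho k.
  move=> k; apply: edist_le_coord; first exact: ltW.
  move=> i; have [h1 h2] := xb i k; rewrite ler_norml; apply/andP; split; lra.
have rhohalf : forall k, rho k.+1 <= rho k / 2.
  by move=> k; have [_ [_ [_ [h _]]]] := stp k.
have rhobound : forall k, rho k * k.+1%:R <= 1.
  elim => [|k IH]; first by rewrite /rho /= mulr1.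
  have h1 := rhohalf k; have h2 := rho0 k; have h3 := rho0 k.+1.
  have h4 : 0 <= k%:R :> R by rewrite ler0n.
  have e1 : k.+2%:R = k%:R + 2 :> R by rewrite -addn2 natrD.
  have e2 : k.+1%:R = k%:R + 1 :> R by rewrite -addn1 natrD.
  rewrite e1; rewrite e2 in IH.
  nra.
have M1' := M1.
have small : forall e, 0 < e -> exists k, M * rho k < e.
  move=> e e0; have eM : 0 < e / M by rewrite divr_gt0 //; lra.
  have [k hk] := ltr_add_invr eM; rewrite add0r in hk.
  exists k.
  have n0 : 0 < k.+1%:R :> R by rewrite ltr0n.
  have hu : k.+1%:R * k.+1%:R^-1 = 1 :> R by rewrite mulfV // gt_eqF.
  have he : e / M * M = e by rewrite divfK // gt_eqF //; lra.
  have h1 := rhobound k; have h2 := rho0 k.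
  have hr : rho k <= k.+1%:R^-1 by rewrite -div1r ler_pdivlMr.
  have M0 : 0 < M by lra.
  move: he hk; set t := e / M; move=> he hk.
  apply: (le_lt_trans (ler_wpM2l (ltW M0) hr)).
  by rewrite -he mulrC ltr_pM2r.
exists x; split.
  apply: Qc => e e0; have [k hk] := small e e0.
  exists (c k); split; first exact: (inv k).1.
  by rewrite edist_sym; apply: le_lt_trans (xc k) hk.
split.
  move=> k xq; have [_ [_ [_ [_ [h _]]]]] := stp k.
  have := xc k.+1; rewrite xq edist_sym /c /rho; lra.
move=> e e0; have [k hk] := small e e0.
have [_ [_ [_ [_ [_ [j [cj hj]]]]]]] := stp k.
exists j.
have h2 := rhohalf k; have h3 := rho0 k; have hM : 0 <= M by lra.
have hj' : M * rho k.+1 < r j := hj.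
have h : edist x (q j) <= M * rho k.+1 by rewrite -cj; exact: xc k.+1.
split; nra.
Qed.

End Baire.
Section PK.
Variable R : realType.
Variable m : nat.
Local Notation P := (pt R m).
Local Notation QT := ({ffun 'I_m.+1 -> rat} * rat)%type.

Lemma closedLn_eclosed (F : set P) : closed_in_Ln F -> eclosed F.
Proof.
move=> [FL cF] y h.
have Ly : Ln y.
  apply/eqP; rewrite -normr_le0; apply/negPn/negP; rewrite -ltNge => yp.
  have [p [Fp pd]] := h _ yp.
  have := coord_le p y ord_max; rewrite (FL p Fp) sub0r normrN => h2.
  have := le_lt_trans h2 pd; by rewrite ltxx.
have [//|nFy] := pselect (F y).
have [e [e0 he]] := cF y Ly nFy.
have [p [Fp pd]] := h e e0.
have : (eball y e `&` F) p by split.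
by rewrite he.
Qed.

Lemma perfect_kernel (F : set P) : eclosed F -> ~ countable F ->
  exists K : set P, K `<=` F /\ eclosed K /\ (exists c0, K c0) /\
    (forall c rho z, K c -> 0 < rho -> exists y, K y /\ edist y c < rho /\ y <> z) /\
    exists q : nat -> P, (forall j, K (q j)) /\
      (forall c e, K c -> 0 < e -> exists j, edist (q j) c < e).
Proof.
move=> Fc ncF.
pose K := [set x | F x /\ forall e, 0 < e -> ~ countable (F `&` eball x e)].
have KF : K `<=` F by move=> x [].
have cD : countable (F `\` K).
  apply: (countable_sub (B := \bigcup_(t in [set t : QT | countable (F `&` qball t)])
       (F `&` qball t))); last first.
    by apply: bigcup_countable => //; apply: countableP.
  move=> x [Fx nK].
  have [e [e0 ce]] : exists e, 0 < e /\ countable (F `&` eball x e).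
    apply: contra_notP nK => h; split => // e e0 ce; apply: h; by exists e.
  have [t [tx tsub]] := rat_ball x e0.
  exists t => //=; apply: countable_sub ce => z [Fz tz]; split => //.
  by rewrite /eball /=; apply: tsub.
have ncK : ~ countable K.
  move=> cK; apply: ncF; apply: (countable_sub (B := K `|` (F `\` K))).
    by move=> z Fz; have [Kz|nKz] := pselect (K z); [left|right].
  exact: countableU.
have Kc : eclosed K.
  move=> y h; split.
    by apply: Fc => e e0; have [p [Kp pd]] := h e e0; exists p; split => //; exact: KF.
  move=> e e0 ce.
  have e20 : 0 < e / 2 by lra.
  have [p [[Fp hp] pd]] := h _ e20.
  apply: (hp _ e20); apply: countable_sub ce => z [Fz zp]; split => //.
  rewrite /eball /= in zp *; have := edist_triangle z p y; lra.
have noiso : forall c rho z, K c -> 0 < rho -> exists y, K y /\ edist y c < rho /\ y <> z.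
  move=> c rho z [Fc' hc] rho0; apply: contra_notP (hc _ rho0) => nex.
  apply: (countable_sub (B := [set z] `|` (F `\` K))); last first.
    by apply: countableU => //; apply: countable1.
  move=> w [Fw wb]; have [Kw|nKw] := pselect (K w); last by right.
  left; apply: contra_notP nex => wz; exists w; split => //.
have [c0 Kc0] : exists c, K c.
  apply: contra_notP ncK => h; apply: (countable_sub (B := set0)) => // x Kx.
  by apply: h; exists x.
have H : forall t : QT, exists p, K p /\ ((exists p', K p' /\ qball t p') -> qball t p).
  move=> t; have [[p' [Kp' tp']]|h] := pselect (exists p', K p' /\ qball t p').
    by exists p'.
  by exists c0; split => // h'; exfalso; apply: h.
have [pF hpF] := choice H.
exists K; split => //; split => //; split; first by exists c0.
split => //.
exists (fun j => if @choice.unpickle QT j is Some t then pF t else c0).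
split.
  by move=> j; case: choice.unpickle => [t|] //; exact: (hpF t).1.
move=> c e Kc' e0; have [t [tc tsub]] := rat_ball c e0.
exists (choice.pickle t); rewrite choice.pickleK.
by apply: tsub; apply: (hpF t).2; exists c.
Qed.

End PK.
Section Final.
Variable R : realType.
Variable m : nat.
Local Notation P := (pt R m).
Variable A : set P.
Hypothesis hA : A `<=` @Ln R m.
Local Notation X := (@Xn R m).
Local Notation op := (tau_open A).

Lemma tnb (U : set P) x : op U -> U x -> Ln x -> ~ A x ->
  exists e, 0 < e /\ tball x e `<=` U.
Proof. by move=> oU Ux Lx nAx; have [_ [_ h]] := op_nb hA oU Ux; exact: h. Qed.

Lemma normal_v : normal X op ->
  ~ exists F : set P, F `<=` @Ln R m `\` A /\ closed_in_Ln F /\ ~ countable F.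
Proof.
move=> N [F [FL [cF ncF]]].
have [K [KF [Kc [[c0 Kc0] [noiso [q [Kq qdense]]]]]]] :=
  perfect_kernel (closedLn_eclosed cF) ncF.
pose Qs := [set y | exists j, q j = y].
pose G := K `\` Qs.
have cQ : closed_in X op Qs by apply: (sub_closed hA FL cF) => y [j <-]; exact: KF.
have cG : closed_in X op G by apply: (sub_closed hA FL cF) => y [Ky _]; exact: KF.
have QG : Qs `&` G = set0 by apply/seteqP; split => // y [Qy [_ nQy]].
have [U [V [oU [oV [QU [GV UV]]]]]] := N _ _ cQ cG QG.
have Hr : forall j, exists e, 0 < e /\ tball (q j) e `<=` U.
  move=> j; have [Lq nAq] := FL _ (KF _ (Kq j)).
  by apply: tnb => //; apply: QU; exists j.
have [r hr] := choice Hr.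
have [x [Kx [xq xd]]] := baire Kc Kc0 noiso Kq qdense (fun j => (hr j).1).
have [Lx nAx] := FL _ (KF _ Kx).
have Gx : G x by split => // -[j qj]; apply: (xq j).
have [s [s0 sV]] := tnb oV (GV _ Gx) Lx nAx.
have [j [d1 d2]] := xd s s0.
have [Lq _] := FL _ (KF _ (Kq j)).
have dm : edist x (q j) < Num.min s (r j) by rewrite lt_min d1 d2.
have [z1 z2] := tb_meet s0 (hr j).1 Lx Lq dm.
have : (U `&` V) (a_eps x (Num.min s (r j))).
  by split; [apply: (hr j).2; right|apply: sV; right].
by rewrite UV.
Qed.

Lemma cp_v : countably_paracompact X op ->
  ~ exists F : set P, F `<=` @Ln R m `\` A /\ closed_in_Ln F /\ ~ countable F.
Proof.
move=> CP [F [FL [cF ncF]]].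
have [K [KF [Kc [[c0 Kc0] [noiso [q [Kq qdense]]]]]]] :=
  perfect_kernel (closedLn_eclosed cF) ncF.
pose Qs := [set y | exists j, q j = y].
have cQ : closed_in X op Qs by apply: (sub_closed hA FL cF) => y [j <-]; exact: KF.
have cK : closed_in X op K by apply: (sub_closed hA FL cF).
have Lqk : forall k, Ln (q k) /\ ~ A (q k) by move=> k; exact: FL _ (KF _ (Kq k)).
pose W (n : nat) := if n is k.+1 then (X `\` K) `|` tball (q k) 1 else X `\` Qs.
have covW : open_cover X op W.
  split.
    case => [|k] /=; first by case: cQ.
    apply: op_setU; first by case: cK.
    by apply: (tball_open hA); [exact: (Lqk k).1|exact: (Lqk k).2|].
  move=> z Xz; have [[k qk]|nQ] := pselect (Qs z).
    by exists k.+1 => //=; right; left.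
  by exists 0%N.
have [J [V [[oV covV] [ref lf]]]] := CP W covW.
have Hj : forall k, exists j, V j (q k).
  by move=> k; have [j _ h] := covV _ (or_intror (Lqk k).1); exists j.
have [jF hjF] := choice Hj.
have VK : forall k z, V (jF k) z -> K z -> z = q k.
  move=> k z Vz Kz; have [i sub] := ref (jF k).
  have Lz : Ln z by have [] := FL _ (KF _ Kz).
  have tb : forall l y, K y -> Ln y -> W l.+1 y -> y = q l.
    move=> l y Ky Ly [[_ nK]|[//|yb]]; first by [].
    by exfalso; exact: PnLn (tb_Pn (ltr01 : (0:R) < 1) yb) Ly.
  case: i sub => [|l] sub.
    by move: (sub _ (hjF k)) => /= [_ h]; exfalso; apply: h; exists k.
  have e1 := tb l z Kz Lz (sub _ Vz).
  have e2 := tb l (q k) (Kq k) (Lqk k).1 (sub _ (hjF k)).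
  by rewrite e1 e2.
have Hr : forall k, exists e, 0 < e /\ tball (q k) e `<=` V (jF k).
  move=> k; apply: tnb; [exact: oV|exact: hjF|exact: (Lqk k).1|exact: (Lqk k).2].
have [r hr] := choice Hr.
have [x [Kx [xq xd]]] := baire Kc Kc0 noiso Kq qdense (fun j => (hr j).1).
have [Lx nAx] := FL _ (KF _ Kx).
have [W' [oW' [W'x finS]]] := lf x (or_intror Lx).
have [s [s0 sW]] := tnb oW' W'x Lx nAx.
have Hn : forall e : R, exists j, 0 < e -> edist x (q j) < e /\ edist x (q j) < r j.
  move=> e; have [e0|e0] := pselect (0 < e).
    by have [j hj] := xd e e0; exists j.
  by exists 0%N.
have [nx hnx] := choice Hn.
have dpos : forall k, 0 < edist x (q k).
  move=> k; rewrite lt_neqAle edist_ge0 andbT; apply/eqP => /esym /edist_eq0.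
  exact: xq.
pose kk := fix kk (n : nat) : nat :=
  if n is n'.+1 then nx (Num.min s (edist x (q (kk n')))) else nx s.
have kkP : forall n, edist x (q (kk n)) < s /\ edist x (q (kk n)) < r (kk n) /\
    edist x (q (kk n.+1)) < edist x (q (kk n)).
  move=> n.
  have h0 : forall n, edist x (q (kk n)) < s /\ edist x (q (kk n)) < r (kk n).
    case => [|n'] /=; first exact: hnx.
    have t0 : 0 < Num.min s (edist x (q (kk n'))) by rewrite lt_min s0 dpos.
    have [h1 h2] := hnx _ t0; split => //.
    by apply: lt_le_trans h1 _; rewrite ge_min lexx.
  have [h1 h2] := h0 n; split => //; split => //=.
  have t0 : 0 < Num.min s (edist x (q (kk n))) by rewrite lt_min s0 dpos.
  have [h3 _] := hnx _ t0.
  by apply: lt_le_trans h3 _; rewrite ge_min lexx orbT.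
have mono : forall n n', (n < n')%N -> edist x (q (kk n')) < edist x (q (kk n)).
  move=> n; elim => [//|n' IH]; rewrite ltnS leq_eqVlt => /orP [/eqP <-|h].
    exact: (kkP n).2.2.
  by apply: lt_trans (kkP n').2.2 (IH h).
have inj : injective (fun n => jF (kk n)).
  move=> n n' /= E.
  have e1 : q (kk n') = q (kk n).
    apply: (VK (kk n)); last exact: Kq.
    by rewrite E; exact: hjF.
  apply/eqP; apply: contraT => nn.
  case: (ltngtP n n') => [lt|lt|eq].
  - by have := mono _ _ lt; rewrite e1 ltxx.
  - by have := mono _ _ lt; rewrite e1 ltxx.
  - by rewrite eq eqxx in nn.
have sub : (fun n => jF (kk n)) @` [set: nat] `<=` [set j | V j `&` W' !=set0].
  move=> j [n _ <-] /=.
  have [h1 [h2 _]] := kkP n.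
  have [Lq _] := Lqk (kk n).
  have dm : edist x (q (kk n)) < Num.min s (r (kk n)) by rewrite lt_min h1 h2.
  have [z1 z2] := tb_meet s0 (hr (kk n)).1 Lx Lq dm.
  exists (a_eps x (Num.min s (r (kk n)))); split.
    by apply: (hr (kk n)).2; right.
  by apply: sW; right.
apply: infinite_nat.
have fi : finite_set ((fun n => jF (kk n)) @` [set: nat]) := sub_finite_set sub finS.
by rewrite -(eq_finite_set (inj_card_eq (fun a b _ _ => inj a b))).
Qed.

End Final.

Theorem mainTheorem6 (R : realType) (m : nat) (hm : (1 <= m)%N)
    (A : set (pt R m)) (hA : A `<=` @Ln R m) :
  let X := @Xn R m in
  let op := tau_open A in
  (lindelof X op <-> paracompact X op) /\
  (lindelof X op <-> countably_paracompact X op) /\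
  (lindelof X op <-> normal X op) /\
  (lindelof X op <->
     ~ exists F : set (pt R m),
         F `<=` @Ln R m `\` A /\ closed_in_Ln F /\ ~ countable F).
Proof.
move=> X op.
have LP := lind_para hA.
have PC : paracompact X op -> countably_paracompact X op by move=> h U; exact: h.
have CL : countably_paracompact X op -> lindelof X op.
  by move=> h; apply: (v_lind hA); exact: (cp_v hA).
split; first by split => // /PC /CL.
split; first by split => // h; exact: PC (LP h).
split; first by split; [exact: lind_normal hA|move=> h; apply: (v_lind hA); exact: (normal_v hA)].
by split; [exact: lind_v hA|exact: v_lind hA].
Qed.
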